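(* Let $(X,m)$, $X=\{x_1,\ldots,x_n\}\subset\mathbb{R}^N$, be a configuration of particles with nonzero masses, exponent $a\neq0$ and nonzero total mass $\mu_0$. Then $(X,m)$ is a central configuration if and only if there exists $\lambda\in\mathbb{R}$ such that, with $S_{ij}=s_{ij}^a-\lambda/\mu_0$ for $i\neq j$ and $S_{jj}=-\frac{1}{m_j}\sum_{i\neq j}m_iS_{ij}$, \[\sum_{i=1}^n\sum_{k=1}^n m_im_kS_{ij}S_{kl}s_{ik}=0\quad\text{for all } j,l=1,\ldots,n.\]
   Context: $s_{ij}=\overrightarrow{x_ix_j}^2$ (so $s_{ii}=0$). Accelerations are $\overrightarrow{\gamma}_j=-\sum_{i\neq j}m_is_{ij}^a\overrightarrow{x_ix_j}$, and $(X,m)$ is central if there exist a vector $\overrightarrow{\gamma}_O$, a point $x_O$ and a real $\lambda$ with $\overrightarrow{\gamma}_j-\overrightarrow{\gamma}_O=\lambda\overrightarrow{x_Ox_j}$ for all $j$. *)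

(* Defs.v *)
From HB Require Import structures.
From mathcomp Require Import all_boot all_order all_algebra.
From mathcomp Require Import reals exp.
Set Implicit Arguments. Unset Strict Implicit. Unset Printing Implicit Defensive.
Import Order.TTheory GRing.Theory Num.Theory.
Local Open Scope ring_scope.

Definition sqdist (R : realType) (N n : nat) (x : 'I_n -> 'rV[R]_N) (i j : 'I_n) : R :=
  \sum_(k < N) (x j 0 k - x i 0 k) ^+ 2.

Definition accel (R : realType) (N n : nat) (a : R) (x : 'I_n -> 'rV[R]_N)
  (m : 'I_n -> R) (j : 'I_n) : 'rV[R]_N :=
  - \sum_(i < n | i != j) (m i * (sqdist x i j `^ a)) *: (x j - x i).

Definition central (R : realType) (N n : nat) (a : R) (x : 'I_n -> 'rV[R]_N)
  (m : 'I_n -> R) : Prop :=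
  exists (gO xO : 'rV[R]_N) (lam : R),
    forall j : 'I_n, accel a x m j - gO = lam *: (x j - xO).

Definition Smat (R : realType) (N n : nat) (a lam : R) (x : 'I_n -> 'rV[R]_N)
  (m : 'I_n -> R) (i j : 'I_n) : R :=
  let mu0 := \sum_(k < n) m k in
  let S0 := fun p q : 'I_n => sqdist x p q `^ a - lam / mu0 in
  if i == j then - (m j)^-1 * \sum_(p < n | p != j) m p * S0 p j
  else S0 i j.

(* Main.v *)
Require Import Defs.
From HB Require Import structures.
From mathcomp Require Import all_boot all_order all_algebra.
From mathcomp Require Import reals exp.
From mathcomp Require Import ring lra.
Import Order.TTheory GRing.Theory Num.Theory.
Local Open Scope ring_scope.

Section H.
Variables (R : realType) (N n : nat) (a lam : R) (x : 'I_n -> 'rV[R]_N) (m : 'I_n -> R).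
Hypothesis hm : forall i, m i != 0.

Let mu0 := \sum_(k < n) m k.
Let S0 := fun p q : 'I_n => sqdist x p q `^ a - lam / mu0.

Lemma sqdistC i j : sqdist x i j = sqdist x j i.
Proof. by apply: eq_bigr => k _; rewrite -sqrrN opprB. Qed.

Lemma SmatD j : Smat a lam x m j j = - (m j)^-1 * \sum_(p < n | p != j) m p * S0 p j.
Proof. by rewrite /Smat eqxx. Qed.

Lemma SmatO i j : i != j -> Smat a lam x m i j = S0 i j.
Proof. by move=> /negbTE h; rewrite /Smat h. Qed.

Lemma colsum j : \sum_i m i * Smat a lam x m i j = 0.
Proof.
rewrite (bigD1 j) //= SmatD mulrA mulrN mulfV // mulN1r.
rewrite [X in - _ + X](eq_bigr (fun i => m i * S0 i j)); first by rewrite addNr.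
by move=> i hij; rewrite SmatO.
Qed.

Lemma rowsum i : \sum_j m j * Smat a lam x m i j = 0.
Proof.
rewrite (bigD1 i) //= SmatD mulrA mulrN mulfV // mulN1r.
rewrite [X in - _ + X](eq_bigr (fun j => m j * S0 j i)); first by rewrite addNr.
by move=> j hij; rewrite SmatO 1?eq_sym // /S0 sqdistC.
Qed.

Lemma quad_scalar (al be y : 'I_n -> R) :
  \sum_i al i = 0 -> \sum_i be i = 0 ->
  \sum_i \sum_k al i * be k * (y k - y i) ^+ 2 =
  - 2 * ((\sum_i al i * y i) * (\sum_k be k * y k)).
Proof.
move=> ha hb.
transitivity (\sum_i (al i * (\sum_k be k * y k ^+ 2) + (al i * y i ^+ 2) * (\sum_k be k)
   - 2 * ((al i * y i) * (\sum_k be k * y k)))).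
  apply: eq_bigr => i _.
  rewrite !mulr_sumr -big_split -sumrB /=.
  by apply: eq_bigr => k _; ring.
rewrite hb; under eq_bigr do rewrite mulr0 addr0.
rewrite sumrB -!mulr_suml ha mul0r sub0r -mulr_sumr -mulr_suml.
by rewrite mulNr.
Qed.

Definition w j : 'rV[R]_N := \sum_i (m i * Smat a lam x m i j) *: x i.

Lemma wE j c : w j 0 c = \sum_i m i * Smat a lam x m i j * x i 0 c.
Proof. by rewrite /w summxE; apply: eq_bigr => i _; rewrite mxE. Qed.

Lemma quad j l :
  \sum_(i < n) \sum_(k < n)
      m i * m k * Smat a lam x m i j * Smat a lam x m k l * sqdist x i k
  = - 2 * \sum_(c < N) w j 0 c * w l 0 c.
Proof.
under eq_bigr do under eq_bigr do rewrite /sqdist mulr_sumr.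
under eq_bigr do rewrite exchange_big /=.
rewrite exchange_big /= mulr_sumr; apply: eq_bigr => c _.
rewrite !wE -(quad_scalar (fun i => m i * Smat a lam x m i j)
   (fun k => m k * Smat a lam x m k l) (fun i => x i 0 c)) ?colsum //.
by apply: eq_bigr => i _; apply: eq_bigr => k _; ring.
Qed.

Lemma wsum : \sum_j m j *: w j = 0.
Proof.
under eq_bigr do rewrite /w scaler_sumr.
rewrite exchange_big /= big1 // => i _.
under eq_bigr do rewrite scalerA.
rewrite -scaler_suml (eq_bigr (fun j => m i * (m j * Smat a lam x m i j))).
  by rewrite -mulr_sumr rowsum mulr0 scale0r.
by move=> j _; ring.
Qed.

Lemma wform (hmu : mu0 != 0) j :
  w j = accel a x m j + lam *: x j - (lam / mu0) *: \sum_i m i *: x i.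
Proof.
have e1 : w j = \sum_(i < n | i != j) (m i * S0 i j) *: (x i - x j).
  rewrite /w (bigD1 j) //= SmatD mulrA mulrN mulfV // mulN1r scaleNr.
  rewrite scaler_suml addrC (eq_bigr (fun i => (m i * S0 i j) *: x i)).
    by rewrite -sumrB; apply: eq_bigr => i _; rewrite scalerBr.
  by move=> i hij; rewrite SmatO.
have e2 : \sum_(i < n | i != j) m i *: (x i - x j) = \sum_i m i *: x i - mu0 *: x j.
  rewrite [RHS](_ : _ = \sum_i m i *: (x i - x j)).
    by rewrite [RHS](bigD1 j) //= subrr scaler0 add0r.
  by rewrite /mu0 scaler_suml -sumrB; apply: eq_bigr => i _; rewrite scalerBr.
have e3 : accel a x m j = \sum_(i < n | i != j) (m i * sqdist x i j `^ a) *: (x i - x j).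
  by rewrite /accel -sumrN; apply: eq_bigr => i _; rewrite -scalerN opprB.
rewrite e1 e3.
rewrite (eq_bigr (fun i => (m i * sqdist x i j `^ a) *: (x i - x j) - (lam / mu0) *: (m i *: (x i - x j)))); last first.
  by move=> i _; rewrite /S0 scalerA -scalerBl; congr (_ *: _); ring.
rewrite sumrB -scaler_sumr e2 scalerBr scalerA mulfVK //.
by rewrite opprB addrA.
Qed.
End H.

Arguments w {R N n}. Arguments wform {R N n a lam x m}. Arguments wsum {R N n} a lam {x m}. Arguments quad {R N n a lam x m}.
Theorem corollaryB1 (R : realType) (N n : nat) (a : R)
    (x : 'I_n -> 'rV[R]_N) (m : 'I_n -> R)
    (hx : injective x)
    (hm : forall i, m i != 0)
    (ha : a != 0)
    (hmu : \sum_(i < n) m i != 0) :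
  central a x m <->
  exists lam : R, forall j l : 'I_n,
    \sum_(i < n) \sum_(k < n)
      m i * m k * Smat a lam x m i j * Smat a lam x m k l * sqdist x i k = 0.
Proof.
set C := \sum_i m i *: x i.
split.
  move=> [gO [xO [lp hc]]]; exists (- lp).
  set v := gO - lp *: xO + (lp / \sum_(i < n) m i) *: C.
  have hw j : w a (- lp) x m j = v.
    rewrite (wform hm hmu) -/C.
    have -> : accel a x m j = gO + lp *: (x j - xO) by rewrite -(hc j) addrC subrK.
    rewrite scalerBr !scaleNr mulNr scaleNr opprK /v.
    congr (_ + _); rewrite addrA [X in X - _]addrAC addrK //.
  have hv : v = 0.
    have := @wsum _ _ _ a (- lp) x m hm; rewrite (eq_bigr (fun j => m j *: v)); last by move=> j _; rewrite hw.
    by rewrite -scaler_suml => /eqP; rewrite scaler_eq0 (negbTE hmu) /= => /eqP.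
  move=> j l; rewrite (quad hm) !hw hv big1 ?mulr0 // => c _.
  by rewrite mxE mul0r.
move=> [lam h].
have hw j : w a lam x m j = 0.
  have := h j j; rewrite (quad hm) => /eqP; rewrite mulf_eq0 oppr_eq0 pnatr_eq0 /=.
  move=> /eqP hs; apply/rowP => c; rewrite mxE.
  have H0 : forall c, true -> 0 <= w a lam x m j 0 c * w a lam x m j 0 c.
    by move=> *; rewrite -expr2 sqr_ge0.
  have := psumr_eq0P H0 hs isT; move/(_ c).
  by move=> /eqP; rewrite mulf_eq0 orbb => /eqP.
exists ((lam / \sum_(i < n) m i) *: C), 0, (- lam) => j.
have := hw j; rewrite (wform hm hmu) -/C => /eqP; rewrite subr_eq0 => /eqP.
rewrite subr0 scaleNr => <-; by rewrite opprD addrA subrr add0r.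
Qed.
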